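(* Let $\mathcal{P}$ be a set of inductively defined predicates and let $P \in \mathcal{P}$, with parameters $(\vec{\alpha},\vec{\beta},\vec{\xi})$, be syntactically compositional. Then $P$ is semantically compositional, i.e. for every pair $\vec{\gamma}=(\gamma_1,\gamma_2)$ of a location variable and a data variable, the entailment $$\exists \vec{\beta}.\ P(\vec{\alpha},\vec{\beta},\vec{\xi}) \ast P(\vec{\beta},\vec{\gamma},\vec{\xi}) \Rightarrow P(\vec{\alpha},\vec{\gamma},\vec{\xi})$$ holds, that is, every stack–heap pair $(s,h)$ satisfying the left-hand side also satisfies the right-hand side.
   Context: Separation logic setting: location variables (interpreted in a set $\mathbb{L}$ of locations, with a constant ${\sf nil}$) and data variables (interpreted as data values, multisets of values, etc.); a set $\mathcal{F}$ of pointer fields and $\mathcal{D}$ of data fields. A state is a pair $(s,h)$: a stack $s$ assigning values to variables, and a heap $h$, a finite partial function mapping pairs (location, pointer field) to locations and pairs (location, data field) to data values. Formulas: pure formulas $\Pi$ (conjunctions of (dis)equalities of location variables and constraints $\Delta$ over data variables in some decidable theory), spatial formulas $\Sigma ::= \mathtt{emp} \mid E\mapsto\rho \mid Q(E,\vec{F}) \mid \Sigma\ast\Sigma$, and formulas built as $\Pi\land\Sigma$, disjunction and existential quantification. $\mathtt{emp}$ holds iff the heap is empty; $E\mapsto\{(f_i,x_i)\}_{i\in I}$ holds iff the heap is defined exactly on location $s(E)$ with fields $f_i$ and $h(s(E),f_i)=s(x_i)$; $\Sigma_1\ast\Sigma_2$ holds iff the heap splits into two domain-disjoint parts satisfying $\Sigma_1$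 and $\Sigma_2$ respectively. Each predicate $Q\in\mathcal{P}$ is defined by a finite set of rules $Q(E,\vec{F}) ::= \exists\vec{Z}.\ \Pi\land\Sigma$, with least-fixed-point semantics. A rule is a base rule if $\Sigma$ contains no predicate atoms, otherwise inductive. Every inductive rule $Q(E,\vec F)::=\exists \vec Z.\Pi\land\Sigma_1\ast\Sigma_2$ satisfies: $\Sigma_1$ consists only of points-to atoms, contains a unique points-to atom with source $E$, contains all location variables of $\vec Z$, and its Gaifman graph is a connected DAG in which every vertex is reachable from $E$; $\Sigma_2$ consists only of predicate atoms $Q'(Z,\vec{Z'})$ with $Z$ a vertex of that graph without outgoing arcs. Syntactic compositionality: $P$ has parameters $(\vec\alpha,\vec\beta,\vec\xi)$ with source parameters $\vec\alpha=(\alpha_1,\alpha_2)=(E,C)$, hole parameters $\vec\beta=(\beta_1,\beta_2)=(F,H)$ ($E,F$ location variables, $C,H$ data variables) and static parameters $\vec\xi$. $P$ is syntactically compositional if its definition has exactly one base rule, namely $P(\vec\alpha,\vec\beta,\vec\xi)::=\alpha_1=\beta_1\land\alpha_2=\beta_2\land\mathtt{emp}$, and at least one inductive rule, and every inductive rule has the form $P(\vec\alpha,\vec\beta,\vec\xi)::=\exists\vec Z.\ \Pi\land\Sigma_1\ast\Sigma_2\ast P(\vec\gamma,\vec\beta,\vec\xi)$ where $\Sigma_1$ is a nonempty separating conjunction of points-to atoms, $\Sigma_2$ is a (possibly empty) separating conjunction of predicate atoms (possibly including $P$ atoms), $\vec\gamma$ consists of variables of $\vec Z$, and the variables of $\vec\beta$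 do not occur in $\Pi$, $\Sigma_1$, $\Sigma_2$ or $\vec\gamma$ (and the rule satisfies the general root/connectedness conditions above). *)

(* Defs.v *)
From Stdlib Require Import List Relations Permutation.
Import ListNotations.

(* Parameters of the logic: locations with nil, data values (one domain that
   may contain values, multisets, ...), pointer fields, data fields, an abstract
   decidable theory of data constraints (satisfaction relation + free variables),
   and predicate names. *)
Record SLSig := {
  Loc : Type;
  nilloc : Loc;
  Dat : Type;
  PFld : Type;
  DFld : Type;
  DCon : Type;
  dsat : DCon -> (nat -> Dat) -> Prop;
  dfv : DCon -> list nat;
  PName : Type
}.

Definition dcoincidence (S : SLSig) : Prop :=
  forall (c : DCon S) (v w : nat -> Dat S),
    (forall x, In x (dfv S c) -> v x = w x) -> (dsat S c v <-> dsat S c w).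

(* Location terms: location variables (names in nat) and the constant nil.
   Data variables are names in nat (separate namespace). *)
Inductive lterm := LV (x : nat) | LNil.
Inductive arg := AL (t : lterm) | AD (x : nat).
Inductive formal := FL (x : nat) | FD (x : nat).

Definition formal_arg (f : formal) : arg :=
  match f with FL x => AL (LV x) | FD x => AD x end.

Definition lvars_lterm (t : lterm) : list nat :=
  match t with LV x => [x] | LNil => [] end.
Definition lvars_arg (a : arg) : list nat :=
  match a with AL t => lvars_lterm t | AD _ => [] end.
Definition dvars_arg (a : arg) : list nat :=
  match a with AL _ => [] | AD x => [x] end.
Definition lformals (fs : list formal) : list nat :=
  flat_map (fun f => match f with FL x => [x] | FD _ => [] end) fs.
Definition dformals (fs : list formal) : list nat :=
  flat_map (fun f => match f with FL _ => [] | FD x => [x] end) fs.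

Section SL.
Variable S : SLSig.

Inductive pure_atom :=
  | PEq (t u : lterm)
  | PNeq (t u : lterm)
  | PDEq (x y : nat)
  | PData (c : DCon S).

Record pto := { src : lterm;
                pflds : list (PFld S * lterm);
                dflds : list (DFld S * nat) }.

Record patom := { pname : PName S; proot : lterm; pargs : list arg }.

Inductive satom := SPto (p : pto) | SPred (a : patom).

(* a rule  Q(formals) ::= exists Z. Pi /\ Sigma, where Pi is a conjunction
   (list) of pure atoms, Sigma a separating conjunction (list) of spatial atoms
   (empty list = emp); Z = all variables of the body other than the formals. *)
Record rule := { rpure : list pure_atom; rspat : list satom }.

Record pdef := { pformals : list formal; prules : list rule }.

Record stack := { sl : nat -> Loc S; sd : nat -> Dat S }.
Record heap := { hp : Loc S -> PFld S -> option (Loc S);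
                 hd : Loc S -> DFld S -> option (Dat S) }.
Definition val := (Loc S + Dat S)%type.

Definition evl (s : stack) (t : lterm) : Loc S :=
  match t with LV x => sl s x | LNil => nilloc S end.
Definition eva (s : stack) (a : arg) : val :=
  match a with AL t => inl (evl s t) | AD x => inr (sd s x) end.

Definition upd_l (s : stack) (x : nat) (v : Loc S) : stack :=
  {| sl := fun y => if Nat.eqb y x then v else sl s y; sd := sd s |}.
Definition upd_d (s : stack) (x : nat) (v : Dat S) : stack :=
  {| sl := sl s; sd := fun y => if Nat.eqb y x then v else sd s y |}.

Definition hemp (h : heap) : Prop :=
  (forall l f, hp h l f = None) /\ (forall l f, hd h l f = None).

Definition hunion (h1 h2 h : heap) : Prop :=
  (forall l f, hp h1 l f = None \/ hp h2 l f = None) /\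
  (forall l f, hd h1 l f = None \/ hd h2 l f = None) /\
  (forall l f, hp h l f = match hp h1 l f with Some v => Some v | None => hp h2 l f end) /\
  (forall l f, hd h l f = match hd h1 l f with Some v => Some v | None => hd h2 l f end).

Definition pto_sat (s : stack) (p : pto) (h : heap) : Prop :=
  (forall l f, hp h l f <> None <-> (l = evl s (src p) /\ exists t, In (f, t) (pflds p))) /\
  (forall l f, hd h l f <> None <-> (l = evl s (src p) /\ exists x, In (f, x) (dflds p))) /\
  (forall f t, In (f, t) (pflds p) -> hp h (evl s (src p)) f = Some (evl s t)) /\
  (forall f x, In (f, x) (dflds p) -> hd h (evl s (src p)) f = Some (sd s x)).

Definition pure_sat (s : stack) (a : pure_atom) : Prop :=
  match a with
  | PEq t u => evl s t = evl s u
  | PNeq t u => evl s t <> evl s u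
  | PDEq x y => sd s x = sd s y
  | PData c => dsat S c (sd s)
  end.

Definition bind_ok (s : stack) (fs : list formal) (vs : list val) : Prop :=
  Forall2 (fun f v => eva s (formal_arg f) = v) fs vs.

Inductive psat (defs : PName S -> pdef) : PName S -> list val -> heap -> Prop :=
  | psat_intro : forall Q vs h r s,
      In r (prules (defs Q)) ->
      bind_ok s (pformals (defs Q)) vs ->
      Forall (pure_sat s) (rpure r) ->
      ssat defs s (rspat r) h ->
      psat defs Q vs h
with ssat (defs : PName S -> pdef) : stack -> list satom -> heap -> Prop :=
  | ssat_nil : forall s h, hemp h -> ssat defs s [] h
  | ssat_pto : forall s p rest h h1 h2,
      hunion h1 h2 h -> pto_sat s p h1 -> ssat defs s rest h2 ->
      ssat defs s (SPto p :: rest) h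
  | ssat_pred : forall s a rest h h1 h2,
      hunion h1 h2 h ->
      psat defs (pname a) (inl (evl s (proot a)) :: map (eva s) (pargs a)) h1 ->
      ssat defs s rest h2 ->
      ssat defs s (SPred a :: rest) h.

Definition atom_sat (defs : PName S -> pdef) (s : stack) (a : patom) (h : heap) : Prop :=
  psat defs (pname a) (inl (evl s (proot a)) :: map (eva s) (pargs a)) h.

Definition ptos_of (l : list satom) : list pto :=
  flat_map (fun a => match a with SPto p => [p] | SPred _ => [] end) l.
Definition preds_of (l : list satom) : list patom :=
  flat_map (fun a => match a with SPto _ => [] | SPred q => [q] end) l.

Definition is_inductive (r : rule) : Prop := preds_of (rspat r) <> [].

Definition lvars_pure (a : pure_atom) : list nat :=
  match a with
  | PEq t u | PNeq t u => lvars_lterm t ++ lvars_lterm u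
  | _ => []
  end.
Definition dvars_pure (a : pure_atom) : list nat :=
  match a with
  | PDEq x y => [x; y]
  | PData c => dfv S c
  | _ => []
  end.
Definition lvars_pto (p : pto) : list nat :=
  lvars_lterm (src p) ++ flat_map (fun ft => lvars_lterm (snd ft)) (pflds p).
Definition dvars_pto (p : pto) : list nat := map snd (dflds p).
Definition lvars_patom (a : patom) : list nat :=
  lvars_lterm (proot a) ++ flat_map lvars_arg (pargs a).
Definition dvars_patom (a : patom) : list nat := flat_map dvars_arg (pargs a).
Definition lvars_satom (a : satom) : list nat :=
  match a with SPto p => lvars_pto p | SPred q => lvars_patom q end.
Definition lvars_rule (r : rule) : list nat :=
  flat_map lvars_pure (rpure r) ++ flat_map lvars_satom (rspat r).

Definition gvertex (sig : list pto) (t : lterm) : Prop :=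
  exists p, In p sig /\ (src p = t \/ exists f, In (f, t) (pflds p)).
Definition garc (sig : list pto) (u v : lterm) : Prop :=
  exists p f, In p sig /\ src p = u /\ In (f, v) (pflds p).

Definition root_conditions (e : nat) (lfs : list nat) (r : rule) : Prop :=
  let sig := ptos_of (rspat r) in
  (exists l1 p l2, sig = l1 ++ p :: l2 /\ src p = LV e /\
                   Forall (fun q => src q <> LV e) (l1 ++ l2)) /\
  (forall x, In x (lvars_rule r) -> ~ In x lfs -> gvertex sig (LV x)) /\
  (forall t, gvertex sig t -> clos_refl_trans lterm (garc sig) (LV e) t) /\
  (forall t, ~ clos_trans lterm (garc sig) t t) /\
  (forall a, In a (preds_of (rspat r)) ->
             gvertex sig (proot a) /\ forall v, ~ garc sig (proot a) v).

Definition wf_system (defs : PName S -> pdef) : Prop :=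
  forall Q, NoDup (pformals (defs Q)) /\
    exists e rest, pformals (defs Q) = FL e :: rest /\
      forall r, In r (prules (defs Q)) -> is_inductive r ->
        root_conditions e (lformals (pformals (defs Q))) r.

Definition synt_compositional (defs : PName S -> pdef) (P : PName S)
    (a1 a2 b1 b2 : nat) (xs : list formal) : Prop :=
  let fs := pformals (defs P) in
  let rs := prules (defs P) in
  let base := {| rpure := [PEq (LV a1) (LV b1); PDEq a2 b2]; rspat := [] |} in
  fs = FL a1 :: FD a2 :: FL b1 :: FD b2 :: xs /\
  (exists l1 l2, rs = l1 ++ base :: l2 /\ Forall is_inductive (l1 ++ l2)) /\
  (exists r, In r rs /\ is_inductive r) /\
  (forall r, In r rs -> is_inductive r ->
     exists (sig1 : list pto) (sig2 : list patom) (g1 g2 : nat),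
       sig1 <> [] /\
       Permutation (rspat r)
         (map SPto sig1 ++ map SPred sig2 ++
          [SPred {| pname := P; proot := LV g1;
                    pargs := AD g2 :: AL (LV b1) :: AD b2 :: map formal_arg xs |}]) /\
       ~ In g1 (lformals fs) /\ ~ In g2 (dformals fs) /\
       ~ In b1 (flat_map lvars_pure (rpure r) ++ flat_map lvars_pto sig1 ++
                flat_map lvars_patom sig2 ++ [g1]) /\
       ~ In b2 (flat_map dvars_pure (rpure r) ++ flat_map dvars_pto sig1 ++
                flat_map dvars_patom sig2 ++ [g2])).

Definition sem_compositional_at (defs : PName S -> pdef) (P : PName S)
    (a1 a2 b1 b2 : nat) (xs : list formal) (g1 g2 : nat) : Prop :=
  forall (s : stack) (h : heap),
    (exists (l : Loc S) (d : Dat S),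
       let s' := upd_d (upd_l s b1 l) b2 d in
       exists h1 h2, hunion h1 h2 h /\
         atom_sat defs s' {| pname := P; proot := LV a1;
              pargs := AD a2 :: AL (LV b1) :: AD b2 :: map formal_arg xs |} h1 /\
         atom_sat defs s' {| pname := P; proot := LV b1;
              pargs := AD b2 :: AL (LV g1) :: AD g2 :: map formal_arg xs |} h2) ->
    atom_sat defs s {| pname := P; proot := LV a1;
              pargs := AD a2 :: AL (LV g1) :: AD g2 :: map formal_arg xs |} h.

End SL.

(* Main.v *)
Require Import Defs.
From Stdlib Require Import List Relations Permutation FunctionalExtensionality Arith.
Import ListNotations.

Inductive ssatG (S : SLSig) (A : PName S -> list (val S) -> heap S -> Prop)
  : stack S -> list (satom S) -> heap S -> Prop :=
  | sG_nil : forall s h, hemp S h -> ssatG S A s [] h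
  | sG_pto : forall s p rest h h1 h2,
      hunion S h1 h2 h -> pto_sat S s p h1 -> ssatG S A s rest h2 ->
      ssatG S A s (SPto S p :: rest) h
  | sG_pred : forall s a rest h h1 h2,
      hunion S h1 h2 h ->
      A (pname S a) (inl (evl S s (proot S a)) :: map (eva S s) (pargs S a)) h1 ->
      ssatG S A s rest h2 ->
      ssatG S A s (SPred S a :: rest) h.

Definition hu (S : SLSig) (h1 h2 : heap S) : heap S :=
  {| Defs.hp := fun l f => match hp S h1 l f with Some v => Some v | None => hp S h2 l f end;
     Defs.hd := fun l f => match Defs.hd S h1 l f with Some v => Some v | None => Defs.hd S h2 l f end |}.

Lemma heap_ext (S : SLSig) (h h' : heap S) :
  (forall l f, hp S h l f = hp S h' l f) -> (forall l f, Defs.hd S h l f = Defs.hd S h' l f) -> h = h'.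
Proof.
  destruct h as [p d], h' as [p' d']; simpl; intros H1 H2.
  assert (p = p') by (extensionality l; extensionality f; auto).
  assert (d = d') by (extensionality l; extensionality f; auto).
  subst; reflexivity.
Qed.

Lemma hunion_hu (S : SLSig) h1 h2 h : hunion S h1 h2 h -> h = hu S h1 h2.
Proof. intros (_&_&H3&H4); apply heap_ext; simpl; auto. Qed.

Lemma hu_hunion (S : SLSig) h1 h2 :
  (forall l f, hp S h1 l f = None \/ hp S h2 l f = None) ->
  (forall l f, Defs.hd S h1 l f = None \/ Defs.hd S h2 l f = None) ->
  hunion S h1 h2 (hu S h1 h2).
Proof. intros; repeat split; auto. Qed.

Lemma hunion_comm (S : SLSig) h1 h2 h : hunion S h1 h2 h -> hunion S h2 h1 h.
Proof.
  intros (H1&H2&H3&H4); repeat split.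
  - intros l f; destruct (H1 l f); auto.
  - intros l f; destruct (H2 l f); auto.
  - intros l f; rewrite H3; destruct (H1 l f) as [E|E]; rewrite E;
    destruct (hp S h2 l f), (hp S h1 l f); congruence.
  - intros l f; rewrite H4; destruct (H2 l f) as [E|E]; rewrite E;
    destruct (Defs.hd S h2 l f), (Defs.hd S h1 l f); congruence.
Qed.

Lemma hunion_assoc (S : SLSig) h1 h2 h12 h3 h :
  hunion S h1 h2 h12 -> hunion S h12 h3 h ->
  exists h23, hunion S h2 h3 h23 /\ hunion S h1 h23 h.
Proof.
  intros (A1&A2&A3&A4) (B1&B2&B3&B4).
  exists (hu S h2 h3); repeat split; simpl.
  - intros l f; specialize (B1 l f); rewrite A3 in B1;
    destruct (hp S h1 l f), (hp S h2 l f); destruct B1; intuition congruence.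
  - intros l f; specialize (B2 l f); rewrite A4 in B2;
    destruct (Defs.hd S h1 l f), (Defs.hd S h2 l f); destruct B2; intuition congruence.
  - intros l f; specialize (B1 l f); specialize (A1 l f); rewrite A3 in B1;
    destruct (hp S h1 l f), (hp S h2 l f); destruct A1; intuition congruence.
  - intros l f; specialize (B2 l f); specialize (A2 l f); rewrite A4 in B2;
    destruct (Defs.hd S h1 l f), (Defs.hd S h2 l f); destruct A2; intuition congruence.
  - intros l f; rewrite B3, A3; destruct (hp S h1 l f); auto.
  - intros l f; rewrite B4, A4; destruct (Defs.hd S h1 l f); auto.
Qed.

Lemma hunion_assoc' (S : SLSig) h1 h2 h23 h3 h :
  hunion S h2 h3 h23 -> hunion S h1 h23 h ->
  exists h12, hunion S h1 h2 h12 /\ hunion S h12 h3 h.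
Proof.
  intros A B. apply hunion_comm in A. apply hunion_comm in B.
  destruct (hunion_assoc S _ _ _ _ _ A B) as (h21 & C & D).
  exists h21; split; apply hunion_comm; auto.
Qed.

Lemma hunion_emp_l (S : SLSig) h1 h2 h : hemp S h1 -> hunion S h1 h2 h -> h = h2.
Proof.
  intros [E1 E2] (_&_&H3&H4); apply heap_ext; intros l f;
  [rewrite H3, E1 | rewrite H4, E2]; auto.
Qed.

Lemma hunion_emp (S : SLSig) h : exists e, hemp S e /\ hunion S e h h.
Proof.
  exists {| Defs.hp := fun _ _ => None; Defs.hd := fun _ _ => None |}; repeat split; simpl; auto.
Qed.

Definition atomG (S : SLSig) (A : PName S -> list (val S) -> heap S -> Prop)
  (s : stack S) (a : satom S) (h : heap S) : Prop :=
  match a with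
  | SPto _ p => pto_sat S s p h
  | SPred _ q => A (pname S q) (inl (evl S s (proot S q)) :: map (eva S s) (pargs S q)) h
  end.

Lemma ssatG_cons_inv S A s a l h : ssatG S A s (a :: l) h ->
  exists h1 h2, hunion S h1 h2 h /\ atomG S A s a h1 /\ ssatG S A s l h2.
Proof. intros H; inversion H; subst; eauto 10. Qed.

Lemma ssatG_cons S A s a l h h1 h2 : hunion S h1 h2 h -> atomG S A s a h1 ->
  ssatG S A s l h2 -> ssatG S A s (a :: l) h.
Proof. destruct a; simpl; intros; econstructor; eauto. Qed.

Lemma ssatG_app_inv S A s l1 l2 h : ssatG S A s (l1 ++ l2) h ->
  exists ha hb, hunion S ha hb h /\ ssatG S A s l1 ha /\ ssatG S A s l2 hb.
Proof.
  revert h; induction l1 as [|a l1 IH]; intros h H; simpl in *.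
  - destruct (hunion_emp S h) as (e & He & Hu). exists e, h; split; [exact Hu | split; [constructor; auto | exact H]].
  - apply ssatG_cons_inv in H as (h1 & h2 & Hu & Ha & Hr).
    apply IH in Hr as (ha & hb & Hu2 & Ha2 & Hb2).
    destruct (hunion_assoc' S _ _ _ _ _ Hu2 Hu) as (h12 & U1 & U2).
    exists h12, hb; split; [exact U2 | split; [eapply ssatG_cons; eauto | exact Hb2]].
Qed.

Lemma ssatG_app S A s l1 l2 ha hb h : ssatG S A s l1 ha -> ssatG S A s l2 hb ->
  hunion S ha hb h -> ssatG S A s (l1 ++ l2) h.
Proof.
  intros H; revert hb h; induction H; intros hb h' Hb Hu; simpl.
  - rewrite (hunion_emp_l S _ _ _ H Hu); auto.
  - destruct (hunion_assoc S _ _ _ _ _ H Hu) as (h23 & U1 & U2). econstructor; eauto.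
  - destruct (hunion_assoc S _ _ _ _ _ H Hu) as (h23 & U1 & U2). econstructor; eauto.
Qed.

Lemma ssatG_perm S A s l l' h : Permutation l l' -> ssatG S A s l h -> ssatG S A s l' h.
Proof.
  intros P; revert h; induction P; intros h H; auto.
  - apply ssatG_cons_inv in H as (h1 & h2 & Hu & Ha & Hr). eapply ssatG_cons; eauto.
  - apply ssatG_cons_inv in H as (h1 & h2 & Hu & Ha & Hr).
    apply ssatG_cons_inv in Hr as (h3 & h4 & Hu2 & Hb & Hr).
    destruct (hunion_assoc' S _ _ _ _ _ Hu2 Hu) as (h13 & U1 & U2).
    apply hunion_comm in U1.
    destruct (hunion_assoc S _ _ _ _ _ U1 U2) as (h5 & V1 & V2).
    eapply ssatG_cons; eauto. eapply ssatG_cons; eauto.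
Qed.

Lemma ssatG_transfer S A s s' l h :
  (forall a h1, In a l -> atomG S A s a h1 -> atomG S A s' a h1) ->
  ssatG S A s l h -> ssatG S A s' l h.
Proof.
  intros Hag H; induction H.
  - constructor; auto.
  - econstructor; eauto. apply (Hag (SPto S p)); simpl; auto.
    apply IHssatG; intros; apply Hag; simpl; auto.
  - econstructor; eauto. apply (Hag (SPred S a)); simpl; auto.
    apply IHssatG; intros; apply Hag; simpl; auto.
Qed.

Lemma ssatG_mono S (A B : PName S -> list (val S) -> heap S -> Prop) s l h :
  (forall Q vs h, A Q vs h -> B Q vs h) -> ssatG S A s l h -> ssatG S B s l h.
Proof. intros HAB H; induction H; econstructor; eauto. Qed.

Lemma ssatG_ssat S defs s l h : ssatG S (psat S defs) s l h -> ssat S defs s l h.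
Proof. intros H; induction H; econstructor; eauto. Qed.

Scheme psat_mut := Induction for psat Sort Prop
with ssat_mut := Induction for ssat Sort Prop.

Lemma evl_agree S s s' t : (forall x, In x (lvars_lterm t) -> sl S s x = sl S s' x) ->
  evl S s t = evl S s' t.
Proof. destruct t; simpl; auto. Qed.

Lemma pure_agree S (Hdc : dcoincidence S) s s' a :
  (forall x, In x (lvars_pure S a) -> sl S s x = sl S s' x) ->
  (forall x, In x (dvars_pure S a) -> sd S s x = sd S s' x) ->
  pure_sat S s a -> pure_sat S s' a.
Proof.
  intros HL HD; destruct a; simpl in *.
  - rewrite !(evl_agree S s s'); auto; intros; apply HL; apply in_or_app; auto.
  - rewrite !(evl_agree S s s'); auto; intros; apply HL; apply in_or_app; auto.
  - rewrite !HD; simpl; auto.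
  - apply (Hdc c (sd S s) (sd S s')); auto.
Qed.

Lemma pto_agree S s s' p h :
  (forall x, In x (lvars_pto S p) -> sl S s x = sl S s' x) ->
  (forall x, In x (dvars_pto S p) -> sd S s x = sd S s' x) ->
  pto_sat S s p h -> pto_sat S s' p h.
Proof.
  intros HL HD (H1 & H2 & H3 & H4). unfold lvars_pto, dvars_pto in *.
  assert (Es : evl S s (src S p) = evl S s' (src S p)).
  { apply evl_agree; intros; apply HL; apply in_or_app; auto. }
  split; [|split; [|split]].
  - intros l f; rewrite <- Es; apply H1.
  - intros l f; rewrite <- Es; apply H2.
  - intros f t Hin. rewrite <- Es, H3 with (t := t); auto. f_equal.
    apply evl_agree; intros; apply HL; apply in_or_app; right.
    apply in_flat_map; exists (f, t); auto.
  - intros f x Hin. rewrite <- Es, H4 with (x := x); auto. f_equal.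
    apply HD. apply in_map_iff. exists (f, x); auto.
Qed.

Lemma args_agree S s s' args :
  (forall x, In x (flat_map lvars_arg args) -> sl S s x = sl S s' x) ->
  (forall x, In x (flat_map dvars_arg args) -> sd S s x = sd S s' x) ->
  map (eva S s) args = map (eva S s') args.
Proof.
  induction args as [|a args IH]; simpl; intros HL HD; auto.
  f_equal.
  - destruct a as [t|x]; simpl in *.
    + f_equal; apply evl_agree; intros; apply HL; apply in_or_app; auto.
    + f_equal; apply HD; auto.
  - apply IH; intros; [apply HL | apply HD]; apply in_or_app; auto.
Qed.

Lemma formals_agree S s s' xs :
  (forall x, In (FL x) xs -> sl S s x = sl S s' x) ->
  (forall x, In (FD x) xs -> sd S s x = sd S s' x) ->
  map (eva S s) (map formal_arg xs) = map (eva S s') (map formal_arg xs).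
Proof.
  induction xs as [|a xs IH]; simpl; intros HL HD; auto.
  f_equal.
  - destruct a; simpl; f_equal; auto.
  - apply IH; auto.
Qed.

Lemma bind_ok_map S s fs vs : bind_ok S s fs vs -> vs = map (eva S s) (map formal_arg fs).
Proof. induction 1; simpl; f_equal; auto. Qed.

Lemma map_bind_ok S s fs : bind_ok S s fs (map (eva S s) (map formal_arg fs)).
Proof. induction fs; simpl; constructor; auto. Qed.

Definition Ppsat S defs P (Q : PName S) (vs : list (val S)) (h : heap S) : Prop :=
  Q = P -> forall A Ad Bl Bd X, vs = inl A :: inr Ad :: inl Bl :: inr Bd :: X ->
  forall C Cd h2 h', psat S defs P (inl Bl :: inr Bd :: inl C :: inr Cd :: X) h2 ->
  hunion S h h2 h' -> psat S defs P (inl A :: inr Ad :: inl C :: inr Cd :: X) h'.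

Lemma upd_sl S s b1 b2 C Cd x : sl S (upd_d S (upd_l S s b1 C) b2 Cd) x =
  if Nat.eqb x b1 then C else sl S s x.
Proof. reflexivity. Qed.
Lemma upd_sd S s b1 b2 C Cd x : sd S (upd_d S (upd_l S s b1 C) b2 Cd) x =
  if Nat.eqb x b2 then Cd else sd S s x.
Proof. reflexivity. Qed.

Lemma upd_sl_ne S s b1 b2 C Cd x : x <> b1 -> sl S (upd_d S (upd_l S s b1 C) b2 Cd) x = sl S s x.
Proof. intros; rewrite upd_sl; destruct (Nat.eqb_spec x b1); congruence. Qed.
Lemma upd_sd_ne S s b1 b2 C Cd x : x <> b2 -> sd S (upd_d S (upd_l S s b1 C) b2 Cd) x = sd S s x.
Proof. intros; rewrite upd_sd; destruct (Nat.eqb_spec x b2); congruence. Qed.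

Lemma nodup_facts (a1 a2 b1 b2 : nat) xs :
  NoDup (FL a1 :: FD a2 :: FL b1 :: FD b2 :: xs) ->
  a1 <> b1 /\ a2 <> b2 /\ ~ In (FL b1) xs /\ ~ In (FD b2) xs.
Proof.
  intros H. inversion H as [|? ? N1 H1]; subst. inversion H1 as [|? ? N2 H2]; subst.
  inversion H2 as [|? ? N3 H3]; subst. inversion H3 as [|? ? N4 H4]; subst.
  repeat split.
  - intros ->; apply N1; simpl; tauto.
  - intros ->; apply N2; simpl; tauto.
  - intros Hin; apply N3; right; exact Hin.
  - exact N4.
Qed.

Lemma main S (Hdc : dcoincidence S) defs (Hwf : wf_system S defs) P a1 a2 b1 b2 xs
  (HP : synt_compositional S defs P a1 a2 b1 b2 xs) :
  forall Q vs h, psat S defs Q vs h -> Ppsat S defs P Q vs h.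
Proof.
  destruct HP as (Hfs & (l1 & l2 & Hrs & Hind) & _ & Hshape).
  destruct (Hwf P) as [Hnd _]. rewrite Hfs in Hnd.
  destruct (nodup_facts _ _ _ _ _ Hnd) as (Na & Nb & Nx1 & Nx2).
  apply (psat_mut S defs (fun Q vs h _ => Ppsat S defs P Q vs h)
     (fun s l h _ => ssatG S (fun Q vs h => psat S defs Q vs h /\ Ppsat S defs P Q vs h) s l h)).
  4: { intros; econstructor; eauto. }
  3: { intros; econstructor; eauto. }
  2: { intros; constructor; auto. }
  intros Q vs h r s Hr Hb Hpure Hs IH EQ A Ad Bl Bd X Evs C Cd h2 h' Hp2 Hu.
  subst Q. apply bind_ok_map in Hb. rewrite Hfs in Hb. simpl in Hb.
  rewrite Evs in Hb. injection Hb as EA EAd EBl EBd EX.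
  rewrite Hrs in Hr. apply in_app_or in Hr.
  assert (Hcase : r = {| rpure := [PEq S (LV a1) (LV b1); PDEq S a2 b2]; rspat := [] |}
                  \/ is_inductive S r).
  { rewrite Forall_forall in Hind.
    destruct Hr as [Hr|[Hr|Hr]]; [right|left; symmetry; exact Hr|right];
    apply Hind; apply in_or_app; auto. }
  destruct Hcase as [-> | Hi].
  -
    simpl in IH, Hpure. assert (Hem : hemp S h) by (inversion IH; auto).
    rewrite Forall_forall in Hpure.
    assert (Hp1 := Hpure _ (or_introl eq_refl)).
    assert (Hp2' := Hpure _ (or_intror (or_introl eq_refl))).
    simpl in Hp1, Hp2'. rewrite (hunion_emp_l S _ _ _ Hem Hu).
    rewrite EA, EAd, Hp1, Hp2', <- EBl, <- EBd. exact Hp2.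
  - assert (HrIn : In r (prules S (defs P))).
    { rewrite Hrs; apply in_or_app; destruct Hr as [Hr|[Hr|Hr]]; [left; exact Hr | right; left; exact Hr | right; right; exact Hr]. }
    destruct (Hshape r HrIn Hi) as (sig1 & sig2 & g1 & g2 & _ & Hperm & _ & _ & Hb1 & Hb2).
    set (last := {| pname := P; proot := LV g1;
                    pargs := AD g2 :: AL (LV b1) :: AD b2 :: map formal_arg xs |}) in *.
    apply (ssatG_perm _ _ _ _ _ _ Hperm) in IH. rewrite app_assoc in IH.
    apply ssatG_app_inv in IH as (ha & hl & Hul & Ha & Hl).
    apply ssatG_cons_inv in Hl as (hP & he & Hue & [HPs HPp] & He).
    assert (Hem : hemp S he) by (inversion He; auto).
    apply hunion_comm in Hue. rewrite (hunion_emp_l S _ _ _ Hem Hue) in Hul. clear Hue.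
    destruct (hunion_assoc S _ _ _ _ _ Hul Hu) as (h23 & U1 & U2).
    simpl in HPp.
    assert (Hnew := HPp eq_refl _ _ _ _ _ eq_refl C Cd h2 h23).
    rewrite <- EBl, <- EBd, <- EX in Hnew. specialize (Hnew Hp2 U1).
    set (s1 := upd_d S (upd_l S s b1 C) b2 Cd).
    assert (EX1 : map (eva S s1) (map formal_arg xs) = map (eva S s) (map formal_arg xs)).
    { apply formals_agree; intros x Hx.
      - apply upd_sl_ne; intros ->; contradiction.
      - apply upd_sd_ne; intros ->; contradiction. }
    assert (Hg1 : g1 <> b1).
    { intros ->; apply Hb1; repeat (apply in_or_app; right); simpl; auto. }
    assert (Hg2 : g2 <> b2).
    { intros ->; apply Hb2; repeat (apply in_or_app; right); simpl; auto. }
    apply psat_intro with (r := r) (s := s1).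
    + exact HrIn.
    + replace (inl A :: inr Ad :: inl C :: inr Cd :: X)
        with (map (eva S s1) (map formal_arg (pformals S (defs P)))).
      { apply map_bind_ok. }
      rewrite Hfs; simpl. rewrite EX1, EX, EA, EAd.
      rewrite !Nat.eqb_refl.
      replace (a1 =? b1) with false by (symmetry; apply Nat.eqb_neq; auto).
      replace (a2 =? b2) with false by (symmetry; apply Nat.eqb_neq; auto).
      reflexivity.
    + rewrite Forall_forall in Hpure |- *. intros a Ha'.
      apply (pure_agree S Hdc s); auto.
      * intros x Hx; symmetry; apply upd_sl_ne; intros ->; apply Hb1.
        apply in_or_app; left; apply in_flat_map; eauto.
      * intros x Hx; symmetry; apply upd_sd_ne; intros ->; apply Hb2.
        apply in_or_app; left; apply in_flat_map; eauto.
    + apply ssatG_ssat. apply (ssatG_perm _ _ _ _ _ _ (Permutation_sym Hperm)).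
      rewrite app_assoc. apply (ssatG_app _ _ _ _ _ ha h23 h'); auto.
      * apply (ssatG_mono _ (fun Q vs h => psat S defs Q vs h /\ Ppsat S defs P Q vs h) (psat S defs)) in Ha;
          [| intros ? ? ? []; auto].
        apply (ssatG_transfer _ _ s); auto.
        intros at1 hx Hin Hat. apply in_app_or in Hin as [Hin|Hin];
          apply in_map_iff in Hin as (q & <- & Hq); simpl in *.
        -- apply (pto_agree S s); auto.
           ++ intros x Hx; symmetry; apply upd_sl_ne; intros ->; apply Hb1.
              apply in_or_app; right; apply in_or_app; left; apply in_flat_map; eauto.
           ++ intros x Hx; symmetry; apply upd_sd_ne; intros ->; apply Hb2.
              apply in_or_app; right; apply in_or_app; left; apply in_flat_map; eauto.
        -- assert (E1 : evl S s1 (proot S q) = evl S s (proot S q)).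
           { apply evl_agree; intros x Hx; apply upd_sl_ne; intros ->; apply Hb1.
             do 2 (apply in_or_app; right); apply in_or_app; left; apply in_flat_map.
             exists q; split; auto; unfold lvars_patom; apply in_or_app; auto. }
           assert (E2 : map (eva S s1) (pargs S q) = map (eva S s) (pargs S q)).
           { apply args_agree; intros x Hx.
             - apply upd_sl_ne; intros ->; apply Hb1.
               do 2 (apply in_or_app; right); apply in_or_app; left; apply in_flat_map.
               exists q; split; auto; unfold lvars_patom; apply in_or_app; auto.
             - apply upd_sd_ne; intros ->; apply Hb2.
               do 2 (apply in_or_app; right); apply in_or_app; left; apply in_flat_map.
               exists q; split; auto. }
           rewrite E1, E2; exact Hat.
      * destruct (hunion_emp S h23) as (e & Hem2 & Heu). apply hunion_comm in Heu.
        eapply ssatG_cons; [exact Heu | | constructor; exact Hem2].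
        simpl. rewrite !Nat.eqb_refl.
        replace (g1 =? b1) with false by (symmetry; apply Nat.eqb_neq; auto).
        replace (g2 =? b2) with false by (symmetry; apply Nat.eqb_neq; auto).
        rewrite EX1, <- EX. exact Hnew.
Qed.

Theorem theorem1 (S : SLSig) (Hdc : dcoincidence S)
  (defs : PName S -> pdef S) (Hwf : wf_system S defs)
  (P : PName S) (a1 a2 b1 b2 : nat) (xs : list formal)
  (HP : synt_compositional S defs P a1 a2 b1 b2 xs) :
  forall g1 g2 : nat, g1 <> b1 -> g2 <> b2 ->
    sem_compositional_at S defs P a1 a2 b1 b2 xs g1 g2.
Proof.
  intros g1 g2 Hg1 Hg2 s h (l & d & h1 & h2 & Hu & H1 & H2).
  assert (Hm := main S Hdc defs Hwf P a1 a2 b1 b2 xs HP).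
  destruct HP as (Hfs & _).
  destruct (Hwf P) as [Hnd _]. rewrite Hfs in Hnd.
  destruct (nodup_facts _ _ _ _ _ Hnd) as (Na & Nb & Nx1 & Nx2).
  unfold atom_sat in *; cbn [pname proot pargs map eva evl] in *.
  set (s' := upd_d S (upd_l S s b1 l) b2 d) in *.
  assert (EX : map (eva S s') (map formal_arg xs) = map (eva S s) (map formal_arg xs)).
  { apply formals_agree; intros x Hx.
    - apply upd_sl_ne; intros ->; contradiction.
    - apply upd_sd_ne; intros ->; contradiction. }
  rewrite EX in H1, H2.
  assert (R := Hm _ _ _ H1 eq_refl _ _ _ _ _ eq_refl _ _ _ _ H2 Hu).
  unfold s' in R. rewrite !upd_sl_ne, !upd_sd_ne in R by auto. exact R.
Qed.
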